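(* Let $D\ge 1$, $0<a<\tfrac12$, $N_0>0$, $P>0$, and $\sigma_{\mathrm{eff}}=\sqrt{N_0/P}$. For real $x$ let $x \bmod 1 \triangleq x-\lfloor x+\tfrac12\rfloor$, applied entrywise to vectors. For $t\in\mathbb{R}$ define the per-dimension distortion $$\delta(t)=\mathbb{E}_{n}\Big[\big([t+n]\bmod 1 - t\big)^2\Big],\qquad n\sim\mathcal{N}(0,\sigma_{\mathrm{eff}}^2),$$ and for $\mathbf{s}\in\mathbb{R}^D$ define $\delta(\mathbf{s})=\mathbb{E}_{\mathbf{n}}\big[\lVert[\mathbf{s}+\mathbf{n}]\bmod 1-\mathbf{s}\rVert^2\big]$ with $\mathbf{n}\sim\mathcal{N}(\mathbf{0},\sigma_{\mathrm{eff}}^2\mathbf{I}_D)$ (so $\delta(\mathbf{s})=\sum_{d=1}^D\delta(s_d)$). Then for every $\mathbf{s}=(s_1,\dots,s_D)\in[-a,a]^D$, $$D\,\delta(0)\le\delta(\mathbf{s})\le D\,\delta(a).$$ Moreover, for real numbers $s_d,s'_d\in[-a,a]$ with $|s'_d|<|s_d|$, one has $\delta(s'_d)<\delta(s_d)$.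
   Context: Interpretation: in the P$^2$-AirComp protocol, when the true sum equals $\mathbf{s}\in[-a,a]^D$, the server's estimate is $[\mathbf{s}+\mathbf{z}/\sqrt{P}]\bmod 1$ with channel noise $\mathbf{z}\sim\mathcal{N}(\mathbf{0},N_0\mathbf{I}_D)$, so $\delta(\mathbf{s})$ is its pointwise mean-square error; the bound holds for arbitrary distributions of the sum supported in $[-a,a]^D$. *)

(* Defs.v *)
From HB Require Import structures.
From mathcomp Require Import all_boot all_order all_algebra.
From mathcomp Require Import all_classical all_reals all_analysis.
Set Implicit Arguments. Unset Strict Implicit. Unset Printing Implicit Defensive.
Import Order.TTheory GRing.Theory Num.Theory.
Local Open Scope ring_scope.

Definition mod1 {R : realType} (x : R) : R := x - (Num.floor (x + 2^-1))%:~R.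

Definition sigma_eff {R : realType} (N0 P : R) : R := Num.sqrt (N0 / P).

Definition delta1 {R : realType} (sigma t : R) : \bar R :=
  (\int[normal_prob 0 sigma]_(n in [set: R]) ((mod1 (t + n) - t) ^+ 2)%:E)%E.

(* D-dimensional distortion, with i.i.d. N(0, sigma^2) noise per coordinate:
   the squared norm splits coordinatewise, so it is the sum of delta1. *)
Definition deltaD {R : realType} (D : nat) (sigma : R) (s : 'I_D -> R) : \bar R :=
  (\sum_(d < D) delta1 sigma (s d))%E.

(* Main.v *)
Require Import Defs.
From HB Require Import structures.
From mathcomp Require Import all_boot all_order all_algebra.
From mathcomp Require Import all_classical all_reals all_analysis.
From mathcomp Require Import measurable_realfun ring lra zify.
Import Order.TTheory GRing.Theory Num.Theory.
Local Open Scope ring_scope.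
Local Open Scope classical_set_scope.

Section Pt.
Context {R : realType}.

Lemma int_cases (d : int) (lo hi : int) : (lo%:~R : R) - 1 < d%:~R -> d%:~R < (hi%:~R : R) + 1 ->
  (lo <= d <= hi)%R.
Proof.
move=> h1 h2.
have a : (lo - 1 < d)%R by rewrite -(ltr_int R) intrB.
have b : (d < hi + 1)%R by rewrite -(ltr_int R) intrD.
apply/andP; split; lia.
Qed.

Lemma cmpF (n u v : R) (k1 k2 : int) :
  k1%:~R <= u + n + 2^-1 < k1%:~R + 1 ->
  k2%:~R <= v + n + 2^-1 < k2%:~R + 1 ->
  ((0 <= u <= v /\ v < 2^-1) \/ (- 2^-1 < v /\ v <= u <= 0)) ->
  (n - k1%:~R) ^+ 2 <= (n - k2%:~R) ^+ 2.
Proof.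
move=> /andP[a1 a2] /andP[b1 b2] H.
have E : (k2%:~R : R) = k1%:~R + (k2 - k1)%:~R by rewrite intrB; ring.
case: H => [[/andP[u0 uv] v2]|[v2 /andP[vu u0]]].
- have /andP[l h] := @int_cases (k2 - k1) 0 1 ltac:(rewrite /=; lra) ltac:(rewrite /=; lra).
  have : (k2 - k1 = 0 \/ k2 - k1 = 1)%R by lia.
  by rewrite E; case=> ->; rewrite /=; nra.
- have /andP[l h] := @int_cases (k2 - k1) (-1) 0 ltac:(rewrite /=; lra) ltac:(rewrite /=; lra).
  have : (k2 - k1 = 0 \/ k2 - k1 = -1)%R by lia.
  by rewrite E; case=> ->; rewrite /=; nra.
Qed.
End Pt.
Section Meas.
Context {R : realType}.
Notation mu := (@lebesgue_measure R).

Lemma mopp : measurable_fun [set: measurableTypeR R] (-%R : measurableTypeR R -> measurableTypeR R).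
Proof. exact: measurable_realfun.oppr_measurable. Qed.

Lemma leb_N (A : set R) : measurable A -> mu ((-%R) @^-1` A) = mu A.
Proof.
move=> mA.
have := @lebesgue_measure_unique R (measure_function_pushforward__canonical__measure_function_Measure mu mopp) _ A mA.
move=> h; rewrite h //.
move=> _ [[a b] _ <-] /=.
rewrite /pushforward.
have -> : (-%R) @^-1` `]a, b]%classic = `[(- b), (- a)[%classic :> set R.
  apply/seteqP; split => x /=; rewrite !in_itv /= => /andP[h1 h2];
    apply/andP; split; lra.
rewrite !lebesgue_measure_itv /= !lte_fin ltrN2.
case: ifP => // _; rewrite -EFinB; congr EFin; ring.
Qed.

Lemma pdfN (s x : R) : s != 0 -> normal_pdf 0 s (- x) = normal_pdf 0 s x.
Proof. by move=> s0; rewrite normal_pdfE // /normal_fun !subr0 sqrrN. Qed.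

Lemma normal_N (s : R) (A : set R) : s != 0 -> measurable A ->
  normal_prob 0 s ((-%R) @^-1` A) = normal_prob 0 s A.
Proof.
move=> s0 mA; rewrite /normal_prob.
transitivity (\int[mu]_(x in (-%R) @^-1` A)
   ((fun y => (normal_pdf 0 s y)%:E) \o (-%R)) x)%E.
  by apply: eq_integral => x _ /=; rewrite pdfN.
rewrite -(ge0_integral_pushforward mopp) //; last first.
- by move=> y _; rewrite lee_fin normal_pdf_ge0.
- apply/measurable_EFinP; apply: measurable_funTS; exact: measurable_normal_pdf.
apply: eq_measure_integral => B mB _ /=.
by rewrite /pushforward leb_N.
Qed.

Lemma reflect_int (s : R) (g : R -> R) : s != 0 ->
  measurable_fun [set: R] g -> (forall x, 0 <= g x) ->
  (\int[normal_prob 0 s]_(x in [set: R]) (g (- x))%:E =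
   \int[normal_prob 0 s]_(x in [set: R]) (g x)%:E)%E.
Proof.
move=> s0 mg g0.
transitivity (\int[normal_prob 0 s]_(x in (-%R) @^-1` [set: R])
   ((fun y => (g y)%:E) \o (-%R)) x)%E.
  by [].
rewrite -(ge0_integral_pushforward mopp) //; last first.
- by move=> y _; rewrite lee_fin.
- exact/measurable_EFinP.
apply: eq_measure_integral => B mB _ /=.
by rewrite /pushforward normal_N.
Qed.
End Meas.

Section Main.
Context {R : realType}.

Definition ee (t n : R) : R := (mod1 (t + n) - t) ^+ 2.

Lemma mfloor : measurable_fun [set: R] (fun x : R => ((Num.floor x)%:~R : R)).
Proof. by apply: nondecreasing_measurable => // x y xy; rewrite ler_int le_floor. Qed.

Lemma mee t : measurable_fun [set: R] (ee t).
Proof.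
rewrite /ee /mod1; apply: measurable_funX; apply: measurable_funB => //.
apply: measurable_funB; first exact: measurable_funD.
apply: (measurableT_comp mfloor).
by apply: measurable_funD => //; exact: measurable_funD.
Qed.

Lemma ee_ge0 t n : 0 <= ee t n.
Proof. exact: sqr_ge0. Qed.

Lemma ee_le1 t n : - 2^-1 <= t <= 2^-1 -> ee t n <= 1.
Proof.
move=> /andP[t1 t2]; rewrite /ee /mod1.
have /andP[a b] := floor_itv (t + n + 2^-1); rewrite intrD in b.
set k := ((Num.floor _)%:~R : R) in a b *.
nra.
Qed.

Lemma floor_bnd x : ((Num.floor x)%:~R : R) <= x < (Num.floor x)%:~R + 1.
Proof. by have := floor_itv x; rewrite intrD. Qed.

Lemma eeF u v n : ((0 <= u <= v /\ v < 2^-1) \/ (- 2^-1 < v /\ v <= u <= 0)) ->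
  ee u n <= ee v n.
Proof.
move=> H; rewrite /ee /mod1.
have := @cmpF R n u v _ _ (floor_bnd (u + n + 2^-1)) _ H.
have -> : u + n - ((Num.floor (u + n + 2^-1))%:~R) - u = n - (Num.floor (u + n + 2^-1))%:~R by ring.
have -> : v + n - ((Num.floor (v + n + 2^-1))%:~R) - v = n - (Num.floor (v + n + 2^-1))%:~R by ring.
apply; exact: floor_bnd.
Qed.

Lemma cmpG (n u s : R) (k1 k2 : int) :
  k1%:~R <= u + n + 2^-1 < k1%:~R + 1 ->
  k2%:~R <= s + - n + 2^-1 < k2%:~R + 1 ->
  ((0 <= u /\ s + u < 0 /\ - 2^-1 < s) \/ (u <= 0 /\ 0 <= s + u /\ s < 2^-1)) ->
  (n - k1%:~R) ^+ 2 <= (- n - k2%:~R) ^+ 2.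
Proof.
move=> /andP[a1 a2] /andP[b1 b2] H.
have E : (k2%:~R : R) = (k1 + k2)%:~R - k1%:~R by rewrite intrD; ring.
case: H => [[u0 [su s2]]|[u0 [su s2]]].
- have /andP[l h] := @int_cases R (k1 + k2) (-1) 0 ltac:(rewrite intrD /=; lra) ltac:(rewrite intrD /=; lra).
  have : (k1 + k2 = 0 \/ k1 + k2 = -1)%R by lia.
  by rewrite E; case=> ->; rewrite /=; nra.
- have /andP[l h] := @int_cases R (k1 + k2) 0 1 ltac:(rewrite intrD /=; lra) ltac:(rewrite intrD /=; lra).
  have : (k1 + k2 = 0 \/ k1 + k2 = 1)%R by lia.
  by rewrite E; case=> ->; rewrite /=; nra.
Qed.

Lemma eeG u s n : ((0 <= u /\ s + u < 0 /\ - 2^-1 < s) \/ (u <= 0 /\ 0 <= s + u /\ s < 2^-1)) ->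
  ee u n <= ee s (- n).
Proof.
move=> H; rewrite /ee /mod1.
have := @cmpG n u s _ _ (floor_bnd (u + n + 2^-1)) (floor_bnd (s + - n + 2^-1)) H.
have -> : u + n - ((Num.floor (u + n + 2^-1))%:~R) - u = n - (Num.floor (u + n + 2^-1))%:~R by ring.
have -> : s + - n - ((Num.floor (s + - n + 2^-1))%:~R) - s = - n - (Num.floor (s + - n + 2^-1))%:~R by ring.
by [].
Qed.

Lemma flc (x : R) (m : int) : m%:~R <= x < m%:~R + 1 -> ((Num.floor x)%:~R : R) = m%:~R.
Proof. by move=> h; rewrite (@floor_def _ x m) // intrD. Qed.

Lemma sC1 s' s n : 0 <= s' -> s' < s -> s < 2^-1 -> 2^-1 - s <= n <= 2^-1 - (s + s') / 2 ->
  ee s' n + (s + s') <= ee s n.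
Proof.
move=> h1 h2 h3 /andP[n1 n2]; rewrite /ee /mod1.
rewrite (@flc _ 0) /=; last by apply/andP; split; lra.
rewrite (@flc _ 1) /=; last by apply/andP; split; lra.
nra.
Qed.

Lemma sC2 s' s n : - 2^-1 < s -> s < s' -> s' <= 0 ->
  - 2^-1 - (s + s') / 2 <= n <= - 2^-1 - (3 * s + s') / 4 ->
  ee s' n + (- (s + s')) <= ee s n.
Proof.
move=> h1 h2 h3 /andP[n1 n2]; rewrite /ee /mod1.
rewrite (@flc _ 0) /=; last by apply/andP; split; lra.
rewrite (@flc _ (-1)) /=; last by apply/andP; split; lra.
nra.
Qed.

Lemma sC3 s' s n : 0 <= s' -> s < 0 -> s' < - s -> - 2^-1 < s ->
  2^-1 + (3 * s - s') / 4 <= n <= 2^-1 + (s - s') / 2 ->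
  ee s' n + (s' - s) <= ee s (- n).
Proof.
move=> h1 h2 h3 h4 /andP[n1 n2]; rewrite /ee /mod1.
rewrite (@flc _ 0) /=; last by apply/andP; split; lra.
rewrite (@flc _ (-1)) /=; last by apply/andP; split; lra.
nra.
Qed.

Lemma sC4 s' s n : s' <= 0 -> 0 < s -> - s' < s -> s < 2^-1 ->
  - 2^-1 + (s - s') / 2 <= n <= - 2^-1 + (3 * s - s') / 4 ->
  ee s' n + (s - s') <= ee s (- n).
Proof.
move=> h1 h2 h3 h4 /andP[n1 n2]; rewrite /ee /mod1.
rewrite (@flc _ 0) /=; last by apply/andP; split; lra.
rewrite (@flc _ 1) /=; last by apply/andP; split; lra.
nra.
Qed.

Local Open Scope ereal_scope.

Lemma ePpos (s l r : R) : (s != 0)%R -> (l < r)%R -> (-1 <= l)%R -> (r <= 1)%R ->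
  0 < normal_prob 0 s `[l, r]%classic.
Proof.
move=> s0 lr l1 r1.
set m := (normal_peak s * expR (- 1 / (s ^+ 2 *+ 2)))%R.
have m0 : (0 < m)%R by rewrite /m mulr_gt0 ?expR_gt0 ?normal_peak_gt0.
have mI : measurable (`[l, r]%classic : set R) by [].
apply: (@lt_le_trans _ _ (\int[lebesgue_measure]_(x in `[l, r]%classic) (cst m%:E x))).
  rewrite integral_cst //.
  have LI := @lebesgue_measure_itv R `[l, r]%R; rewrite /= in LI.
  rewrite [X in _ * X]LI /= lte_fin lr -EFinB -EFinM lte_fin.
  by rewrite mulr_gt0 // subr_gt0.
apply: ge0_le_integral => //.
- by move=> x _; rewrite lee_fin ltW.
- apply/measurable_EFinP; apply: measurable_funTS; exact: measurable_normal_pdf.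
move=> x /=; rewrite in_itv /= => /andP[xl xr].
rewrite lee_fin normal_pdfE // /m /normal_fun ler_wpM2l ?normal_peak_ge0 // ler_expR.
rewrite subr0 !mulNr lerN2 ler_wpM2r // ?invr_ge0 ?mulrn_wge0 ?sqr_ge0 //.
rewrite expr2; nra.
Qed.

Lemma meeN v : measurable_fun [set: R] (fun n => ee v (- n)).
Proof. apply: measurableT_comp; [exact: mee | exact: measurable_realfun.oppr_measurable]. Qed.

Lemma deltaE s t : delta1 s t = \int[normal_prob 0 s]_(n in [set: R]) (ee t n)%:E.
Proof. by []. Qed.

Lemma deltaN s t : (s != 0)%R ->
  \int[normal_prob 0 s]_(n in [set: R]) (ee t (- n))%:E = delta1 s t.
Proof. move=> s0; rewrite deltaE; apply: reflect_int => //; [exact: mee | exact: ee_ge0]. Qed.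

Lemma leF (s u v : R) : (forall n, (ee u n <= ee v n)%R) -> delta1 s u <= delta1 s v.
Proof.
move=> H; rewrite !deltaE; apply: ge0_le_integral => //.

- by move=> x _; rewrite lee_fin ee_ge0.
- apply/measurable_EFinP; exact: mee.
- apply/measurable_EFinP; exact: mee.
- by move=> x _; rewrite lee_fin.
Qed.

Lemma leG (s u v : R) : (s != 0)%R -> (forall n, (ee u n <= ee v (- n))%R) -> delta1 s u <= delta1 s v.
Proof.
move=> s0 H; rewrite -(deltaN s v s0) deltaE; apply: ge0_le_integral => //.
- by move=> x _; rewrite lee_fin ee_ge0.
- apply/measurable_EFinP; exact: mee.
- apply/measurable_EFinP; exact: meeN.
- by move=> x _; rewrite lee_fin.
Qed.

Lemma delta_fin (s u : R) : (- 2^-1 <= u <= 2^-1)%R -> delta1 s u \is a fin_num.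
Proof.
move=> hu; rewrite ge0_fin_numE; last by rewrite deltaE; apply: integral_ge0 => x _; rewrite lee_fin ee_ge0.
apply: (@le_lt_trans _ _ (\int[normal_prob 0 s]_(n in [set: R]) (cst 1%:E n))).
  rewrite deltaE; apply: ge0_le_integral => //.
  - by move=> x _; rewrite lee_fin ee_ge0.
  - apply/measurable_EFinP; exact: mee.
  - by move=> x _; rewrite lee_fin ee_le1.
rewrite integral_cst //= /normal_prob integral_normal_pdf mul1e ltey //.
Qed.

Lemma ltgen (s u : R) (h : R -> R) (l r c : R) : (s != 0)%R -> measurable_fun [set: R] h ->
  (forall n, (ee u n <= h n)%R) -> (l < r)%R -> (-1 <= l)%R -> (r <= 1)%R -> (0 < c)%R ->
  (forall n, (l <= n <= r)%R -> (ee u n + c <= h n)%R) -> (- 2^-1 <= u <= 2^-1)%R ->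
  delta1 s u < \int[normal_prob 0 s]_(n in [set: R]) (h n)%:E.
Proof.
move=> s0 mh H lr l1 r1 c0 Hc hu.
pose I := (`[l, r]%classic : set R).
have mI : measurable I by rewrite /I; exact: measurable_itv.
have step : \int[normal_prob 0 s]_(n in [set: R]) ((ee u n)%:E + c%:E * (\1_I n)%:E)
   <= \int[normal_prob 0 s]_(n in [set: R]) (h n)%:E.
  apply: ge0_le_integral => //.
  - move=> x _; apply: adde_ge0; first by rewrite lee_fin ee_ge0.
    by apply: mule_ge0; rewrite lee_fin ?(ltW c0) // indicE ler0n.
  - apply: emeasurable_funD; first by apply/measurable_EFinP; exact: mee.
    apply: emeasurable_funM => //; apply/measurable_EFinP; exact: measurable_indic.
  - exact/measurable_EFinP.
  move=> x _; rewrite indicE; have [xI|xI] := boolP (x \in I).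
    rewrite mulr1n mule1 -EFinD lee_fin; apply: Hc; move: xI; rewrite inE /I /= in_itv /=; by [].
  by rewrite mulr0n mule0 adde0 lee_fin.
apply: lt_le_trans step.
rewrite ge0_integralD //; last 4 first.
- by move=> x _; rewrite lee_fin ee_ge0.
- apply/measurable_EFinP; exact: mee.
- by move=> x _; apply: mule_ge0; rewrite lee_fin ?(ltW c0) // indicE ler0n.
- by apply: emeasurable_funM => //; apply/measurable_EFinP; exact: measurable_indic.
rewrite ge0_integralZl_EFin //; last 2 first.
- by apply/measurable_EFinP; exact: measurable_indic.
- exact: ltW.
rewrite integral_indic // setIT -deltaE lteDl; last exact: delta_fin.
by rewrite mule_gt0 // ?lte_fin // ePpos.
Qed.

Lemma sum_cst (x : \bar R) (D : nat) : 0 <= x -> \sum_(d < D) x = (D%:R)%:E * x.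
Proof.
move=> x0; elim: D => [|D IH]; first by rewrite big_ord0 mul0e.
rewrite big_ord_recr /= IH -natr1 EFinD ge0_muleDl ?lee_fin ?ler0n // mul1e.
by [].
Qed.

Lemma le_a (s a t : R) : (s != 0)%R -> (0 <= a)%R -> (a < 2^-1)%R -> (- a <= t <= a)%R ->
  delta1 s t <= delta1 s a.
Proof.
move=> s0 a0 a2 /andP[t1 t2]; have [t0|t0] := leP 0%R t.
  by apply: leF => n; apply: eeF; left; split => //; apply/andP; split.
apply: leG => // n; apply: eeG; right; split; [lra | split; lra].
Qed.

Lemma le_0 (s a t : R) : (a < 2^-1)%R -> (- a <= t <= a)%R ->
  delta1 s 0 <= delta1 s t.
Proof.
move=> a2 /andP[t1 t2]; apply: leF => n; apply: eeF.
have [t0|t0] := leP 0%R t.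
  by left; split; [apply/andP; split => // | lra].
by right; split; [lra | apply/andP; split; lra].
Qed.

Lemma lt_main (sg a s s' : R) : (sg != 0)%R -> (a < 2^-1)%R ->
  (- a <= s <= a)%R -> (- a <= s' <= a)%R -> (`|s'| < `|s|)%R ->
  delta1 sg s' < delta1 sg s.
Proof.
move=> s0 a2 /andP[h1 h2] /andP[h3 h4].
have hu : (- 2^-1 <= s' <= 2^-1)%R by apply/andP; split; lra.
have [sp|sn] := leP 0%R s; have [s'p|s'n] := leP 0%R s'.
- rewrite (ger0_norm sp) (ger0_norm s'p) => lt.
  rewrite [X in _ < X]deltaE.
  apply: (@ltgen sg s' (ee s) (2^-1 - s) (2^-1 - (s + s') / 2) (s + s')) => //.
  + exact: mee.
  + by move=> n; apply: eeF; left; split; [apply/andP; split; lra | lra].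
  + lra.
  + lra.
  + lra.
  + lra.
  + by move=> n hn; apply: sC1 => //; lra.
- rewrite (ger0_norm sp) (ltr0_norm s'n) => lt.
  rewrite -(deltaN sg s s0).
  apply: (@ltgen sg s' (fun n => ee s (- n)) (- 2^-1 + (s - s') / 2) (- 2^-1 + (3 * s - s') / 4) (s - s')) => //.
  + exact: meeN.
  + by move=> n; apply: eeG; right; split; [lra | split; lra].
  + lra.
  + lra.
  + lra.
  + lra.
  + by move=> n hn; apply: sC4 => //; lra.
- rewrite (ltr0_norm sn) (ger0_norm s'p) => lt.
  rewrite -(deltaN sg s s0).
  apply: (@ltgen sg s' (fun n => ee s (- n)) (2^-1 + (3 * s - s') / 4) (2^-1 + (s - s') / 2) (s' - s)) => //.
  + exact: meeN.
  + by move=> n; apply: eeG; left; split; [lra | split; lra].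
  + lra.
  + lra.
  + lra.
  + lra.
  + by move=> n hn; apply: sC3 => //; lra.
- rewrite (ltr0_norm sn) (ltr0_norm s'n) => lt.
  rewrite [X in _ < X]deltaE.
  apply: (@ltgen sg s' (ee s) (- 2^-1 - (s + s') / 2) (- 2^-1 - (3 * s + s') / 4) (- (s + s'))) => //.
  + exact: mee.
  + by move=> n; apply: eeF; right; split; [lra | apply/andP; split; lra].
  + lra.
  + lra.
  + lra.
  + lra.
  + by move=> n hn; apply: sC2 => //; lra.
Qed.

End Main.

Local Close Scope classical_set_scope.

Theorem theorem3 (R : realType) (D : nat) (a N0 P : R) :
  (1 <= D)%N -> 0 < a -> a < 2^-1 -> 0 < N0 -> 0 < P ->
  (forall s : 'I_D -> R, (forall d, -a <= s d <= a) ->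
     ((D%:R)%:E * delta1 (sigma_eff N0 P) 0 <= deltaD (sigma_eff N0 P) s)%E /\
     (deltaD (sigma_eff N0 P) s <= (D%:R)%:E * delta1 (sigma_eff N0 P) a)%E) /\
  (forall s s' : R, -a <= s <= a -> -a <= s' <= a -> `|s'| < `|s| ->
     (delta1 (sigma_eff N0 P) s' < delta1 (sigma_eff N0 P) s)%E).
Proof.
move=> D1 a0 a2 N00 P0.
have s0 : (sigma_eff N0 P != 0)%R.
  by rewrite /sigma_eff gt_eqF // sqrtr_gt0 divr_gt0.
have dge0 t : (0 <= delta1 (sigma_eff N0 P) t)%E.
  by rewrite deltaE; apply: integral_ge0 => x _; rewrite lee_fin ee_ge0.
split.
  move=> s hs; rewrite /deltaD; split.
    rewrite -sum_cst //; apply: lee_sum => d _; exact: (le_0 _ _ _ a2 (hs d)).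
  rewrite -sum_cst //; apply: lee_sum => d _; apply: le_a => //; exact: ltW.
move=> s s' hs hs' lt; exact: (lt_main _ _ _ _ s0 a2 hs hs' lt).
Qed.
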